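(* Let $k\geq 2$ and $n\geq 2t\geq 2$ be integers. Let $B_k(n,t)$ be the number of length-$n$ words over $\Sigma_k$ that have a unique border, this border having length $t$. Then \[\frac{B_k(n,t)}{k^n}\leq \frac{1}{k^t}.\]
   Context: $\Sigma_k=\{0,1,\ldots,k-1\}$. A border of a word $w$ is a non-empty word that is both a proper prefix and a proper suffix of $w$. A word has a unique border if it has exactly one border. *)

(* Defs.v *)
From mathcomp Require Import all_boot all_order all_algebra.
Set Implicit Arguments. Unset Strict Implicit. Unset Printing Implicit Defensive.

(* Words of length n over Sigma_k = {0,...,k-1} are n.-tuple 'I_k. *)

Definition is_border (T : eqType) (u w : seq T) : bool :=
  [&& 0 < size u, size u < size w, prefix u w & suffix u w].

(* All borders of w: every border is a prefix of w, so filtering the prefixes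
   take l w (0 <= l <= |w|) by is_border lists each border exactly once. *)
Definition borders (T : eqType) (w : seq T) : seq (seq T) :=
  [seq u <- [seq take l w | l <- iota 0 (size w).+1] | is_border u w].

Definition Bk (k n t : nat) : nat :=
  #|[set w : n.-tuple 'I_k |
     (size (borders w) == 1) && (size (head [::] (borders w)) == t)]|.

(* Main.v *)
Require Import Defs.
From mathcomp Require Import all_boot all_order all_algebra.
From mathcomp Require Import zify.
Import GRing.Theory Num.Theory.
Local Open Scope ring_scope.

Lemma card_T (k n t : nat) (hn : (2 * t <= n)%N) :
  (#|[set w : n.-tuple 'I_k | take t w == drop (n - t) w]| <= k ^ (n - t))%N.
Proof.
set T := [set w : n.-tuple 'I_k | _].
pose f := fun w : n.-tuple 'I_k => [tuple of drop t w].
rewrite -(card_in_imset (f := f) (D := T)).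
  have := max_card (mem (f @: T)).
  by rewrite card_tuple card_ord.
move=> w1 w2; rewrite !inE => /eqP h1 /eqP h2 /(congr1 val) /= hd.
apply: val_inj => /=.
rewrite -(cat_take_drop t w1) -(cat_take_drop t w2) h1 h2 -hd.
have -> : (n - t = (n - 2 * t) + t)%N by lia.
by rewrite -!drop_drop hd.
Qed.

Lemma Bk_le (k n t : nat) (hn : (2 * t <= n)%N) :
  (Bk k n t * k ^ t <= k ^ n)%N.
Proof.
rewrite /Bk.
apply: (@leq_trans (k ^ (n - t) * k ^ t)%N).
  rewrite leq_mul2r; apply/orP; right.
  apply: (leq_trans _ (card_T k n t hn)).
  apply: subset_leq_card; apply/subsetP => w; rewrite !inE.
  case/andP; case E: (borders w) => [|u s]; first by [].
  move=> _ /eqP /= hu.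
  have : u \in borders w by rewrite E mem_head.
  rewrite mem_filter => /andP [] /and4P [] _ _ hp hs _.
  rewrite prefixE hu in hp; rewrite suffixE hu size_tuple in hs.
  by rewrite (eqP hp) (eqP hs).
have htn : (t <= n)%N by lia.
by rewrite -expnD subnK.
Qed.

Theorem lemma11 (k n t : nat) (hk : (2 <= k)%N) (ht : (1 <= t)%N) (hn : (2 * t <= n)%N) :
  (Bk k n t)%:R / (k%:R ^+ n) <= 1 / (k%:R ^+ t) :> rat.
Proof.
have kp : (0 : rat) < k%:R by rewrite ltr0n; lia.
rewrite ler_pdivrMr ?exprn_gt0 // mul1r mulrC ler_pdivlMr ?exprn_gt0 //.
by rewrite -!natrX -natrM ler_nat Bk_le.
Qed.
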